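(* Let $G$ be a group, $N\trianglelefteq G$ a normal subgroup and $\mathcal{H}$ a family of proper subgroups of $G$. If $\mathcal{H}$ is strongly divided by $N$, then there is a homotopy equivalence $$\operatorname{CC}(G,\mathcal{H})\simeq \operatorname{CC}(G/N,\overline{\mathcal{H}})\ast\operatorname{CC}(N,\mathcal{H}\cap N).$$
   Context: For a group $G$ and a family $\mathcal{K}$ of subgroups, the coset complex $\operatorname{CC}(G,\mathcal{K})$ is the simplicial complex whose vertices are the cosets $gK$ ($g\in G$, $K\in\mathcal{K}$; cosets of different members of $\mathcal{K}$ are different vertices) and where a finite set of vertices spans a simplex iff the cosets have nonempty common intersection; homotopy equivalences and joins ($\ast$) refer to geometric realisations. Write $\mathcal{H}=\mathcal{H}_N\sqcup\mathcal{H}^N$ with $\mathcal{H}_N=\{H\in\mathcal{H}: HN\neq G\}$ and $\mathcal{H}^N=\{K\in\mathcal{H}: KN=G\}$. For $H\le G$ let $\overline{H}$ be its image in $G/N$. Set $\overline{\mathcal{H}}=\{\overline{H}: H\in\mathcal{H}_N\}$ and $\mathcal{H}\cap N=\{K\cap N: K\in\mathcal{H}^N\}$. $\mathcal{H}$ is strongly divided by $N$ if (1) $N\subseteq H$ for all $H\in\mathcal{H}_N$, and (2) $(K_1\cap\dots\cap K_m)N=G$ for all finite collections $K_1,\dots,K_m\in\mathcal{H}^N$. *)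

(* Defs.v *)
From HB Require Import structures.
From mathcomp Require Import all_boot all_order all_algebra.
From mathcomp Require Import all_classical all_reals topology normedtype.
Set Implicit Arguments. Unset Strict Implicit. Unset Printing Implicit Defensive.
Import Order.TTheory GRing.Theory Num.Theory numFieldNormedType.Exports.
Local Open Scope classical_set_scope.
Local Open Scope ring_scope.

Record group := Group {
  gcar :> Type;
  gmul : gcar -> gcar -> gcar;
  gone : gcar;
  ginv : gcar -> gcar;
  gmulA : forall x y z, gmul x (gmul y z) = gmul (gmul x y) z;
  gmul1 : forall x, gmul gone x = x;
  gmulV : forall x, gmul (ginv x) x = gone }.

Definition is_subgroup (G : group) (H : set G) : Prop :=
  H (gone G) /\ (forall x y, H x -> H y -> H (gmul x y)) /\ (forall x, H x -> H (ginv x)).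

Definition is_normal (G : group) (N : set G) : Prop :=
  is_subgroup N /\ forall g n, N n -> N (gmul (gmul g n) (ginv g)).

Definition lcoset (T : Type) (mul : T -> T -> T) (g : T) (A : set T) : set T :=
  [set mul g a | a in A].
Definition setmul (T : Type) (mul : T -> T -> T) (A B : set T) : set T :=
  [set mul a b | a in A & b in B].

(** Coset complex CC(S, fam) of a group whose elements form the set [S] inside
    a type [T] with multiplication [mul] (S is the whole group; cosets gK, g in S). *)
Definition cc_vertex (T : Type) (S : set T) (mul : T -> T -> T)
  (fam : set (set T)) (v : set T * set T) : Prop :=
  fam v.1 /\ exists2 g, S g & v.2 = lcoset mul g v.1.

Definition cc_face (T : Type) (S : set T) (mul : T -> T -> T)
  (fam : set (set T)) (s : set (set T * set T)) : Prop :=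
  finite_set s /\ s !=set0 /\ s `<=` cc_vertex S mul fam /\
  exists x, forall v, s v -> v.2 x.

Definition sjoin (V1 V2 : Type) (F1 : set (set V1)) (F2 : set (set V2))
  : set (set (V1 + V2)) :=
  fun s => s !=set0 /\ (F1 (inl @^-1` s) \/ inl @^-1` s = set0) /\
                        (F2 (inr @^-1` s) \/ inr @^-1` s = set0).

Section Realization.
Variables (R : realType) (V : choiceType) (F : set (set V)).

Definition supp (a : V -> R) : set V := [set v | a v != 0].

Definition is_rpoint (a : V -> R) : Prop :=
  (forall v, 0 <= a v) /\ finite_set (supp a) /\ F (supp a) /\
  \sum_(v \in supp a) a v = 1.

Definition realization : Type := {a : V -> R | is_rpoint a}.

HB.instance Definition _ := gen_eqMixin realization.
HB.instance Definition _ := gen_choiceMixin realization.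

(** weak (coherent) topology: U is open iff U meets every closed simplex |s|
    in an open subset of |s| (|s| carrying its Euclidean = sup-metric topology). *)
Definition realization_open (U : set realization) : Prop :=
  forall s, F s -> forall a : realization, U a -> supp (sval a) `<=` s ->
  exists2 e : R, 0 < e & forall b : realization, supp (sval b) `<=` s ->
     (forall v, s v -> `|sval a v - sval b v| < e) -> U b.

End Realization.

Section RealTop.
Variables (R : realType) (V : choiceType) (F : set (set V)).
HB.instance Definition _ :=
  isSubBaseTopological.Build (realization R F) (@realization_open R V F) id.
End RealTop.

Definition homotopic (R : realType) (X Y : topologicalType) (f g : X -> Y) : Prop :=
  exists H : X * R -> Y,
    {within [set p | 0 <= p.2 <= 1], continuous H} /\
    (forall x, H (x, 0) = f x) /\ (forall x, H (x, 1) = g x).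

Definition homotopy_equivalent (R : realType) (X Y : topologicalType) : Prop :=
  exists (f : X -> Y) (g : Y -> X), continuous f /\ continuous g /\
    homotopic R (g \o f) id /\ homotopic R (f \o g) id.


Local Close Scope ring_scope.
Section CosetData.
Variables (G : group) (N : set G) (Hf : set (set G)).

Definition CC : set (set (set G * set G)) := cc_face [set: G] (@gmul G) Hf.

Definition fam_lowN : set (set G) := [set H | Hf H /\ setmul (@gmul G) H N <> [set: G]].
Definition fam_upN : set (set G) := [set K | Hf K /\ setmul (@gmul G) K N = [set: G]].

(** G/N, realised as the set of cosets gN with setwise product *)
Definition quot_carrier : set (set G) := [set lcoset (@gmul G) g N | g in [set: G]].
Definition quot_mul : set G -> set G -> set G := setmul (@gmul G).
Definition qimage (H : set G) : set (set G) := [set lcoset (@gmul G) h N | h in H].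

Definition fam_bar : set (set (set G)) := [set qimage H | H in fam_lowN].
Definition fam_capN : set (set G) := [set K `&` N | K in fam_upN].

Definition CC_quot : set (set (set (set G) * set (set G))) :=
  cc_face quot_carrier quot_mul fam_bar.
Definition CC_sub : set (set (set G * set G)) := cc_face N (@gmul G) fam_capN.

Definition strongly_divided : Prop :=
  (forall H, fam_lowN H -> N `<=` H) /\
  (forall Ks : set (set G), finite_set Ks -> Ks <> set0 -> Ks `<=` fam_upN ->
     setmul (@gmul G) (\bigcap_(K in Ks) K) N = [set: G]).

End CosetData.

(* Main.v *)
Require Import Defs.
From HB Require Import structures.
From mathcomp Require Import all_boot all_order all_algebra finmap.
From mathcomp Require Import all_classical all_reals topology normedtype.
Import Order.TTheory GRing.Theory Num.Theory numFieldNormedType.Exports.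
Local Open Scope classical_set_scope.

Section Op.
Variables (R : realType) (V : choiceType) (F : set (set V)).
Local Notation ro := (@realization_open R V F).

Lemma ro_open (U : set (realization R F)) : ro U -> open U.
Proof.
move=> h. exists [set U]. move=> _ ->. exact: finI_from1.
by rewrite bigcup_set1.
Qed.

Lemma roT : ro setT.
Proof. by move=> s _ a _ _; exists 1%R => //. Qed.

Lemma roI U1 U2 : ro U1 -> ro U2 -> ro (U1 `&` U2).
Proof.
move=> h1 h2 s Fs a [a1 a2] sa.
have [e1 e1p H1] := h1 s Fs a a1 sa.
have [e2 e2p H2] := h2 s Fs a a2 sa.
exists (Num.min e1 e2); first by rewrite lt_min e1p e2p.
move=> b sb hb; split.
  apply: H1 => // v sv; apply: (lt_le_trans (hb v sv)); by rewrite ge_min lexx.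
apply: H2 => // v sv; apply: (lt_le_trans (hb v sv)); by rewrite ge_min lexx orbT.
Qed.

Lemma ro_finI (E : {fset set (realization R F)}) :
  (forall j, j \in E -> ro j) -> ro (\bigcap_(i in [set` E]) i).
Proof.
elim/fset1U_rect: E => [|x X _ IH] sub.
  by rewrite set_fset0 bigcap_set0; exact: roT.
rewrite bigcap_fsetU1; apply: roI.
  by apply: sub; rewrite fsetU11.
by apply: IH => y yX; apply: sub; rewrite in_fsetU yX orbT.
Qed.

Lemma open_ro (U : set (realization R F)) : open U -> ro U.
Proof.
move=> [D' sD' eU] s Fs a Ua sa; move: Ua; rewrite -eU => -[i Di ia].
have [E sE iE] := sD' i Di.
have roi : ro i.
  rewrite -iE; apply: ro_finI => j jE. have := sE j jE.
  by rewrite inE.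
have [e ep H] := roi s Fs a ia sa.
exists e => // b sb hb; exists i => //; exact: H.
Qed.
End Op.

Definition vert {T : Type} (F : set (set T)) (x : T) := exists2 s, F s & s x.

Lemma real_eq (R : realType) (V : choiceType) (F : set (set V))
  (a b : realization R F) : sval a = sval b -> a = b.
Proof.
case: a => a pa; case: b => b pb /= eab; subst b; congr exist; exact: Prop_irrelevance.
Qed.

Section Iso.
Variables (R : realType) (V W : choiceType) (FV : set (set V)) (FW : set (set W))
  (phi : V -> W) (psi : W -> V).
Hypotheses (hV : forall s, FV s -> FW (phi @` s))
  (kV : forall v, vert FV v -> psi (phi v) = v)
  (kW : forall w, vert FW w -> phi (psi w) = w).

Definition tmap (a : V -> R) : W -> R :=
  fun w => if `[< vert FW w >] then a (psi w) else 0%R.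

Lemma vert_phi v : vert FV v -> vert FW (phi v).
Proof. by move=> [s Fs sv]; exists (phi @` s); [exact: hV|exists v]. Qed.

Lemma tmap_phi (a : V -> R) v : vert FV v -> tmap a (phi v) = a v.
Proof. by move=> hv; rewrite /tmap asboolT ?kV //; exact: vert_phi. Qed.

Lemma supp_vert {a : V -> R} : is_rpoint FV a -> forall v, supp a v -> vert FV v.
Proof. by move=> [_ [_ [Fa _]]] v sv; exists (supp a). Qed.

Lemma supp_tmap {a : V -> R} : is_rpoint FV a -> supp (tmap a) = phi @` supp a.
Proof.
move=> pa; rewrite eqEsubset; split.
  move=> w; rewrite /supp /tmap /=; case: asboolP => [vw|_]; last by rewrite eqxx.
  by move=> h; exists (psi w) => //; rewrite kW.
move=> _ [v av <-]; rewrite /supp /= tmap_phi //; exact: supp_vert pa _ av.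
Qed.

Lemma tmap_point (a : V -> R) : is_rpoint FV a -> is_rpoint FW (tmap a).
Proof.
move=> pa; have [a0 [fa [Fa sa]]] := pa.
split; first by move=> w; rewrite /tmap; case: asboolP.
rewrite (supp_tmap pa); split; first exact: finite_image.
split; first exact: hV.
rewrite fsbig_image; last first.
  move=> x y; rewrite !inE => xs ys exy; rewrite -(kV _ (supp_vert pa _ xs)) exy.
  exact: kV _ (supp_vert pa _ ys).
rewrite -sa; apply: eq_fsbigr => v; rewrite inE => sv.
exact: tmap_phi (supp_vert pa _ sv).
Qed.

Definition tmapR (a : realization R FV) : realization R FW :=
  exist _ (tmap (sval a)) (tmap_point (sval a) (svalP a)).

Lemma tmapR_cont : continuous tmapR.
Proof.
apply/continuousP => A /open_ro roA; apply: ro_open => s Fs a Ua sa.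
have sfa : supp (sval (tmapR a)) `<=` phi @` s.
  by rewrite /= (supp_tmap (svalP a)) //; exact: image_subset.
have [e ep H] := roA _ (hV _ Fs) (tmapR a) Ua sfa.
exists e => // b sb hb; apply: H.
  by rewrite /= (supp_tmap (svalP b)) //; exact: image_subset.
move=> _ [v sv <-] /=; have hv : vert FV v by exists s.
by rewrite !tmap_phi //; exact: hb.
Qed.
End Iso.

Section Iso2.
Variables (R : realType) (V W : choiceType) (FV : set (set V)) (FW : set (set W))
  (phi : V -> W) (psi : W -> V).
Hypotheses (hV : forall s, FV s -> FW (phi @` s))
  (hW : forall t, FW t -> FV (psi @` t))
  (kV : forall v, vert FV v -> psi (phi v) = v)
  (kW : forall w, vert FW w -> phi (psi w) = w).

Let f := @tmapR R V W FV FW phi psi hV kV kW.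
Let g := @tmapR R W V FW FV psi phi hW kW kV.

Lemma gfK a : g (f a) = a.
Proof.
apply: real_eq; apply: funext => v /=; rewrite /tmap.
case: asboolP => [vv|nv].
  have vw : vert FW (phi v) by case: vv => s Fs sv; exists (phi @` s); [exact: hV|exists v].
  by rewrite asboolT // kV.
have pa := svalP a; apply/esym/eqP/negbNE/negP => av; apply: nv.
by case: pa => _ [_ [Fa _]]; exists (supp (sval a)).
Qed.

End Iso2.

Lemma iso_heq (R : realType) (V W : choiceType) (FV : set (set V)) (FW : set (set W))
  (phi : V -> W) (psi : W -> V)
  (hV : forall s, FV s -> FW (phi @` s))
  (hW : forall t, FW t -> FV (psi @` t))
  (kV : forall v, vert FV v -> psi (phi v) = v)
  (kW : forall w, vert FW w -> phi (psi w) = w) :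
  homotopy_equivalent R (realization R FV) (realization R FW).
Proof.
exists (@tmapR R V W FV FW phi psi hV kV kW), (@tmapR R W V FW FV psi phi hW kW kV).
split; first exact: tmapR_cont.
split; first exact: tmapR_cont.
split.
  exists (fun p => p.1); split; first by apply: continuous_subspaceT => x; exact: cvg_fst.
  by split => x //=; rewrite gfK.
exists (fun p => p.1); split; first by apply: continuous_subspaceT => x; exact: cvg_fst.
by split => x //=; rewrite gfK.
Qed.

Section GroupFacts.
Variable G : group.
Implicit Types x y z g : G.
Local Notation "x * y" := (@gmul G x y).
Local Notation "x ^-1" := (@ginv G x).
Local Notation e := (gone G).

Lemma mulKg x y : x^-1 * (x * y) = y.
Proof. by rewrite gmulA gmulV gmul1. Qed.

Lemma mulgV x : x * x^-1 = e.
Proof.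
by rewrite -[LHS]gmul1 -{1}(gmulV (x^-1)) -gmulA (mulKg x) gmulV.
Qed.

Lemma mulg1 x : x * e = x.
Proof. by rewrite -(gmulV x) gmulA mulgV gmul1. Qed.

Lemma mulKVg x y : x * (x^-1 * y) = y.
Proof. by rewrite gmulA mulgV gmul1. Qed.

Lemma mulgK x y : (x * y) * y^-1 = x.
Proof. by rewrite -gmulA mulgV mulg1. Qed.

Lemma mulgKV x y : (x * y^-1) * y = x.
Proof. by rewrite -gmulA gmulV mulg1. Qed.

Lemma invgK x : (x^-1)^-1 = x.
Proof. by rewrite -(mulg1 (x^-1)^-1) -(gmulV x) gmulA gmulV gmul1. Qed.

Lemma invMg x y : (x * y)^-1 = y^-1 * x^-1.
Proof.
have h : (x * y)^-1 * (x * y) = (y^-1 * x^-1) * (x * y).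
  by rewrite gmulV -gmulA (gmulA (x^-1)) gmulV gmul1 gmulV.
by rewrite -(mulgK ((x * y)^-1) (x * y)) h mulgK.
Qed.

Lemma inv1 : e^-1 = e.
Proof. by rewrite -(gmul1 (e^-1)) mulgV. Qed.

Section Sub.
Variable H : set G.
Hypothesis sH : is_subgroup H.
Lemma sub1 : H e. Proof. by case: sH. Qed.
Lemma subM {x y} : H x -> H y -> H (x * y). Proof. by case: sH => _ []; auto. Qed.
Lemma subV {x} : H x -> H (x^-1). Proof. by case: sH => _ []; auto. Qed.

Lemma coset_mem g z : lcoset (@gmul G) g H z <-> H (g^-1 * z).
Proof.
split; first by move=> [a Ha <-]; rewrite mulKg.
by move=> h; exists (g^-1 * z) => //; rewrite mulKVg.
Qed.

Lemma coset_self g : lcoset (@gmul G) g H g.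
Proof. by exists e; [exact: sub1|exact: mulg1]. Qed.

Lemma coset_eq g z : lcoset (@gmul G) g H z -> lcoset (@gmul G) g H = lcoset (@gmul G) z H.
Proof.
move=> /coset_mem hz; rewrite eqEsubset; split => y /coset_mem hy; apply/coset_mem.
  by have := subM (subV hz) hy; rewrite invMg invgK -gmulA mulKVg.
by rewrite -(mulKVg z y) gmulA; apply: subM.
Qed.

Lemma coset_sub g h : H h -> lcoset (@gmul G) g H (g * h).
Proof. by move=> hh; exists h. Qed.
End Sub.
End GroupFacts.
Arguments mulKg {G}. Arguments mulgV {G}. Arguments mulg1 {G}. Arguments mulKVg {G}.
Arguments mulgK {G}. Arguments mulgKV {G}. Arguments invgK {G}. Arguments invMg {G}.
Arguments sub1 {G H}. Arguments subM {G H} sH {x y}. Arguments subV {G H} sH {x}.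
Arguments coset_mem {G H}. Arguments coset_self {G H}. Arguments coset_eq {G H} sH {g z}.
Arguments coset_sub {G H}.

Section Main.
Variables (G : group) (N : set G) (Hf : set (set G)).
Hypotheses (hN : is_normal N) (hH : forall H, Hf H -> is_subgroup H /\ H <> [set: G])
  (hSD : strongly_divided N Hf).
Local Notation "x * y" := (@gmul G x y).
Local Notation "x ^-1" := (@ginv G x).
Local Notation e := (gone G).
Local Notation lc := (lcoset (@gmul G)).
Local Notation sm := (setmul (@gmul G)).

Let sN : is_subgroup N := hN.1.

Lemma nconj g n : N n -> N (g * n * g^-1).
Proof. by case: hN => _; apply. Qed.

Lemma nconjV g n : N n -> N (g^-1 * n * g).
Proof. by move=> /(nconj (g^-1)); rewrite invgK. Qed.

Lemma qmul a b : sm (lc a N) (lc b N) = lc (a * b) N.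
Proof.
rewrite eqEsubset; split.
  move=> _ [_ [n Nn <-] [_ [n' Nn' <-] <-]].
  exists (b^-1 * n * b * n'); first by apply: (subM sN) => //; exact: nconjV.
  by rewrite !gmulA mulgK.
move=> _ [n Nn <-]; exists (a * e); first exact: (coset_sub _ _ (sub1 sN)).
by exists (b * n); [exists n|rewrite mulg1 gmulA].
Qed.

Lemma bigcupq (C : set G) : (forall c n, C c -> N n -> C (c * n)) ->
  \bigcup_(Y in qimage N C) Y = C.
Proof.
move=> hC; rewrite eqEsubset; split.
  by move=> x [_ [c Cc <-] [n Nn <-]]; exact: hC.
by move=> x Cx; exists (lc x N); [exists x|exact: (coset_self sN)].
Qed.

Lemma qimage_coset g H : qimage N (lc g H) = lcoset (@quot_mul G) (lc g N) (qimage N H).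
Proof.
rewrite eqEsubset; split.
  move=> _ [_ [h Hh <-] <-]; exists (lc h N); first by exists h.
  by rewrite /quot_mul qmul.
move=> _ [_ [h Hh <-] <-]; rewrite /quot_mul qmul; exists (g * h) => //.
by exists h.
Qed.

Lemma capN n K : is_subgroup K -> N n -> lc n K `&` N = lc n (K `&` N).
Proof.
move=> sK Nn; rewrite eqEsubset; split.
  move=> _ [[k Kk <-] Nnk]; exists k => //; split => //.
  by rewrite -(mulKg n k); apply: (subM sN) => //; exact: (subV sN).
by move=> _ [k [Kk Nk] <-]; split; [exists k|exact: (subM sN)].
Qed.

Lemma setmul_coset n (L K : set G) : is_subgroup K -> L `<=` K -> L e ->
  sm (lc n L) K = lc n K.
Proof.
move=> sK LK Le; rewrite eqEsubset; split.
  move=> _ [_ [l Ll <-] [k Kk <-]]; exists (l * k); last by rewrite gmulA.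
  by apply: (subM sK) => //; exact: LK.
by move=> _ [k Kk <-]; exists (n * e); [exists e|exists k => //; rewrite mulg1].
Qed.

Lemma sub_of K1 K2 : is_subgroup K1 -> is_subgroup K2 ->
  sm (K1 `&` K2) N = [set: G] -> K1 `&` N = K2 `&` N -> K1 `<=` K2.
Proof.
move=> s1 s2 hs he k K1k.
have : [set: G] k by [].
rewrite -hs => -[k' [K1k' K2k'] [n Nn knk]].
have K1n : K1 n by rewrite -(mulKg k' n) knk; apply: (subM s1) => //; exact: (subV s1).
have : (K2 `&` N) n by rewrite -he.
by move=> [K2n _]; rewrite -knk; exact: (subM s2).
Qed.

Lemma upN_sub K : fam_upN N Hf K -> is_subgroup K.
Proof. by move=> [/hH []]. Qed.

Lemma upN_inj K1 K2 : fam_upN N Hf K1 -> fam_upN N Hf K2 -> K1 `&` N = K2 `&` N -> K1 = K2.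
Proof.
move=> u1 u2 he.
have hs : sm (K1 `&` K2) N = [set: G].
  have := hSD.2 [set K1; K2].
  rewrite bigcap_setU1 bigcap_set1; apply.
  - by rewrite finite_setU; split; exact: finite_set1.
  - by move=> /seteqP [/(_ K1) h _]; apply: h; left.
  - by move=> K [->|->].
rewrite eqEsubset; split.
  exact: (sub_of _ _ (upN_sub _ u1) (upN_sub _ u2) hs he).
by apply: (sub_of _ _ (upN_sub _ u2) (upN_sub _ u1) _ (esym he)); rewrite setIC.
Qed.

Lemma upN_coset K g : fam_upN N Hf K -> exists2 n, N n & lc g K = lc n K.
Proof.
move=> u; have sK := upN_sub _ u.
have : [set: G] (g^-1) by [].
rewrite -u.2 => -[k Kk [n Nn kn]].
have gk : g * k = n^-1 by rewrite -(mulgK k n) kn mulKVg.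
exists (g * k); first by rewrite gk; exact: (subV sN).
by apply: (coset_eq sK); exact: coset_sub.
Qed.

Lemma low_up H : Hf H -> ~ fam_lowN N Hf H -> fam_upN N Hf H.
Proof. by move=> hf nl; split => //; apply: contrapT => hn; apply: nl. Qed.

Lemma up_nlow H : fam_upN N Hf H -> ~ fam_lowN N Hf H.
Proof. by move=> [_ h] [_ h']. Qed.


Definition VQ := (set (set G) * set (set G))%type.
Definition VS := (set G * set G)%type.

Definition phiV (v : VS) : VQ + VS :=
  if `[< fam_lowN N Hf v.1 >] then inl (qimage N v.1, qimage N v.2)
  else inr (v.1 `&` N, v.2 `&` N).

Definition Kof (L : set G) : set G := xget L [set K | fam_upN N Hf K /\ K `&` N = L].

Definition psiV (w : VQ + VS) : VS :=
  match w with
  | inl p => (\bigcup_(Y in p.1) Y, \bigcup_(Y in p.2) Y)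
  | inr p => (Kof p.1, sm p.2 (Kof p.1))
  end.

Lemma Kof_up K : fam_upN N Hf K -> Kof (K `&` N) = K.
Proof.
move=> u; have [u0 e0] : fam_upN N Hf (Kof (K `&` N)) /\ Kof (K `&` N) `&` N = K `&` N.
  exact: (@xgetPex _ (K `&` N) [set K0 | fam_upN N Hf K0 /\ K0 `&` N = K `&` N] (ex_intro _ K (conj u erefl))).
exact: upN_inj.
Qed.

Lemma low_sub H : fam_lowN N Hf H -> is_subgroup H.
Proof. by move=> [/hH []]. Qed.

Lemma psi_low H g : fam_lowN N Hf H ->
  psiV (inl (qimage N H, qimage N (lc g H))) = (H, lc g H).
Proof.
move=> l; have sH := low_sub _ l; have NH := hSD.1 H l.
rewrite /=; congr pair; apply: bigcupq.
  by move=> c n Hc Nn; apply: (subM sH) => //; exact: NH.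
by move=> _ n [h Hh <-] Nn; exists (h * n); [apply: (subM sH) => //; exact: NH|rewrite gmulA].
Qed.

Lemma psi_up K n : fam_upN N Hf K -> N n ->
  psiV (inr (K `&` N, lc n (K `&` N))) = (K, lc n K).
Proof.
move=> u Nn; rewrite /= Kof_up //; congr pair.
have sK := upN_sub _ u.
apply: setmul_coset; [exact: sK|by move=> x []|split; [exact: (sub1 sK)|exact: (sub1 sN)]].
Qed.

Lemma phi_cases v : cc_vertex [set: G] (@gmul G) Hf v ->
  (exists H g, [/\ fam_lowN N Hf H, v = (H, lc g H) &
       phiV v = inl (qimage N H, qimage N (lc g H))]) \/
  (exists K n, [/\ fam_upN N Hf K, N n, v = (K, lc n K) &
       phiV v = inr (K `&` N, lc n (K `&` N))]).
Proof.
case: v => H C [/= hf [g _ ->]].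
have [l|nl] := pselect (fam_lowN N Hf H).
  by left; exists H, g; split => //; rewrite /phiV asboolT.
have u := low_up _ hf nl; have [n Nn en] := upN_coset _ g u.
right; exists H, n; split => //; first by rewrite en.
rewrite /phiV asboolF //= en capN //; exact: upN_sub _ u.
Qed.

Lemma vert_low H g : fam_lowN N Hf H ->
  cc_vertex (quot_carrier N) (@quot_mul G) (fam_bar N Hf) (qimage N H, qimage N (lc g H)).
Proof.
move=> l; split; first by exists H.
by exists (lc g N); [exists g|rewrite /= qimage_coset].
Qed.

Lemma vert_up K n : fam_upN N Hf K -> N n ->
  cc_vertex N (@gmul G) (fam_capN N Hf) (K `&` N, lc n (K `&` N)).
Proof. by move=> u Nn; split; [exists K|exists n]. Qed.

Lemma quot_vert w : cc_vertex (quot_carrier N) (@quot_mul G) (fam_bar N Hf) w ->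
  exists H g, fam_lowN N Hf H /\ w = (qimage N H, qimage N (lc g H)).
Proof.
case: w => X D [/= [H l <-] [_ [g _ <-] ->]].
by exists H, g; split => //; rewrite qimage_coset.
Qed.

Lemma sub_vert w : cc_vertex N (@gmul G) (fam_capN N Hf) w ->
  exists K n, [/\ fam_upN N Hf K, N n & w = (K `&` N, lc n (K `&` N))].
Proof. by case: w => L E [/= [K u <-] [n Nn ->]]; exists K, n. Qed.

Lemma kV v : vert (CC Hf) v -> psiV (phiV v) = v.
Proof.
move=> [s [_ [_ [sv _]]] tv]; have := phi_cases _ (sv _ tv).
move=> [[H [g [l -> ->]]]|[K [n [u Nn -> ->]]]]; first exact: psi_low.
exact: psi_up.
Qed.

Lemma sjoin_inl t p : sjoin (CC_quot N Hf) (CC_sub N Hf) t -> t (inl p) ->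
  CC_quot N Hf (inl @^-1` t).
Proof.
move=> [_ [[//|e0] _]] tp.
by have : (inl @^-1` t) p by []; rewrite e0.
Qed.

Lemma sjoin_inr t p : sjoin (CC_quot N Hf) (CC_sub N Hf) t -> t (inr p) ->
  CC_sub N Hf (inr @^-1` t).
Proof.
move=> [_ [_ [//|e0]]] tp.
by have : (inr @^-1` t) p by []; rewrite e0.
Qed.

Lemma kW w : vert (sjoin (CC_quot N Hf) (CC_sub N Hf)) w -> phiV (psiV w) = w.
Proof.
move=> [t jt tw]; case: w tw => p tp.
  have [_ [_ [sv _]]] := sjoin_inl _ _ jt tp.
  have [H [g [l ep]]] := quot_vert _ (sv p tp); subst p.
  by rewrite psi_low // /phiV asboolT.
have [_ [_ [sv _]]] := sjoin_inr _ _ jt tp.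
have [K [n [u Nn ep]]] := sub_vert _ (sv p tp); subst p.
rewrite psi_up // /phiV asboolF /=; last exact: up_nlow.
by rewrite capN //; exact: upN_sub u.
Qed.

Lemma hV s : CC Hf s -> sjoin (CC_quot N Hf) (CC_sub N Hf) (phiV @` s).
Proof.
move=> [fs [[v0 sv0] [sv [x hx]]]].
split; first by exists (phiV v0), v0.
split.
  have [P0|Pn] := pselect (inl @^-1` (phiV @` s) = set0); [by right|left].
  split.
    apply: (sub_finite_set (B := (fun v : VS => (qimage N v.1, qimage N v.2)) @` s)); last exact: finite_image.
    move=> p [v tv ep]; have := phi_cases _ (sv _ tv).
    case=> [[H [g [l ev ph]]]|[K [n [u Nn ev ph]]]]; last by rewrite ph in ep.
    by exists v => //; move: ep; rewrite ph => -[<-]; rewrite ev.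
  split; first by apply/set0P/eqP.
  split.
    move=> p [v tv ep]; have := phi_cases _ (sv _ tv).
    case=> [[H [g [l ev ph]]]|[K [n [u Nn ev ph]]]]; last by rewrite ph in ep.
    move: ep; rewrite ph => -[<-]; exact: vert_low.
  exists (lc x N) => p [v tv ep]; have := phi_cases _ (sv _ tv).
  case=> [[H [g [l ev ph]]]|[K [n [u Nn ev ph]]]]; last by rewrite ph in ep.
  move: ep; rewrite ph => -[<-] /=; exists x => //.
  by have := hx _ tv; rewrite ev.
have [Q0|Qn] := pselect (inr @^-1` (phiV @` s) = set0); [by right|left].
split.
  apply: (sub_finite_set (B := (fun v : VS => (v.1 `&` N, v.2 `&` N)) @` s)); last exact: finite_image.
  move=> p [v tv ep]; have := phi_cases _ (sv _ tv).
  case=> [[H [g [l ev ph]]]|[K [n [u Nn ev ph]]]]; first by rewrite ph in ep.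
  exists v => //; move: ep; rewrite ph => -[<-]; rewrite ev /= capN //; exact: upN_sub _ u.
split; first by apply/set0P/eqP.
split.
  move=> p [v tv ep]; have := phi_cases _ (sv _ tv).
  case=> [[H [g [l ev ph]]]|[K [n [u Nn ev ph]]]]; first by rewrite ph in ep.
  move: ep; rewrite ph => -[<-]; exact: vert_up.
set Ks := [set K | exists2 v, s v & v.1 = K /\ fam_upN N Hf K].
have : sm (\bigcap_(K in Ks) K) N = [set: G].
  apply: hSD.2.
  - apply: (sub_finite_set (B := fst @` s)); last exact: finite_image.
    by move=> K [v tv [<- _]]; exists v.
  - have [p [v tv ep]] : (inr @^-1` (phiV @` s)) !=set0 by apply/set0P/eqP.
    have := phi_cases _ (sv _ tv); case=> [[H [g [l ev ph]]]|[K [n [u Nn ev ph]]]]; first by rewrite ph in ep.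
    move=> /seteqP [/(_ K) h _]; apply: h; exists v; [exact: tv|by rewrite ev].
  - by move=> K [v _ [_ u]].
move=> hs; have : [set: G] (x^-1) by [].
rewrite -hs => -[k kK [n Nn kn]].
have xk : x * k = n^-1 by rewrite -(mulgK k n) kn mulKVg.
exists (x * k) => p [v tv ep].
have := phi_cases _ (sv _ tv); case=> [[H [g [l ev ph]]]|[K [n' [u Nn' ev ph]]]]; first by rewrite ph in ep.
move: ep; rewrite ph => -[<-]; rewrite -capN //; last exact: upN_sub _ u.
split; last by rewrite xk; exact: (subV sN).
have hxv := hx _ tv; rewrite ev /= in hxv.
rewrite (coset_eq (upN_sub _ u) hxv); apply: coset_sub; apply: kK; exists v; [exact: tv|by rewrite ev].
Qed.

Lemma hW t : sjoin (CC_quot N Hf) (CC_sub N Hf) t -> CC Hf (psiV @` t).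
Proof.
move=> jt; have [[w0 tw0] [hP hQ]] := jt.
have fP : finite_set (inl @^-1` t) by case: hP => [[f _]|->]; [exact: f|exact: finite_set0].
have fQ : finite_set (inr @^-1` t) by case: hQ => [[f _]|->]; [exact: f|exact: finite_set0].
have ft : finite_set t.
  apply: (sub_finite_set (B := inl @` (inl @^-1` t) `|` inr @` (inr @^-1` t))).
    by case=> p tp; [left|right]; exists p.
  by rewrite finite_setU; split; exact: finite_image.
split; first exact: finite_image.
split; first by exists (psiV w0), w0.
split.
  move=> _ [w tw <-]; case: w tw => p tp.
    have [_ [_ [sv _]]] := sjoin_inl _ _ jt tp.
    have [H [g [l ep]]] := quot_vert _ (sv p tp); subst p.
    by rewrite psi_low //; split; [exact: l.1|by exists g].
  have [_ [_ [sv _]]] := sjoin_inr _ _ jt tp.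
  have [K [n [u Nn ep]]] := sub_vert _ (sv p tp); subst p.
  by rewrite psi_up //; split; [exact: u.1|by exists n].
have Pq : (inl @^-1` t) !=set0 -> exists q, forall p, t (inl p) -> p.2 (lc q N).
  move=> [p0 tp0]; have [_ [_ [sv [Q0 hQ0]]]] := sjoin_inl _ _ jt tp0.
  have [H [g [l ep]]] := quot_vert _ (sv p0 tp0).
  have := hQ0 p0 tp0; rewrite ep /= => -[c _ ec].
  by exists c => p tp; rewrite ec; exact: hQ0.
have Qy : (inr @^-1` t) !=set0 -> exists y, forall p, t (inr p) -> p.2 y.
  move=> [p0 tp0]; have [_ [_ [_ [y hy]]]] := sjoin_inr _ _ jt tp0.
  by exists y.
have Kup : forall p, t (inr p) -> fam_upN N Hf (Kof p.1).
  move=> p tp; have [_ [_ [sv _]]] := sjoin_inr _ _ jt tp.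
  have [K [n [u Nn ep]]] := sub_vert _ (sv p tp); subst p.
  by rewrite /= Kof_up.
have [P0|Pn] := pselect (inl @^-1` t = set0).
  have [Q0|Qn] := pselect (inr @^-1` t = set0).
    case: w0 tw0 => p tp.
      by have : (inl @^-1` t) p by []; rewrite P0.
    by have : (inr @^-1` t) p by []; rewrite Q0.
  have [y hy] : exists y, forall p, t (inr p) -> p.2 y by apply: Qy; apply/set0P/eqP.
  exists y => _ [w tw <-]; case: w tw => p tp.
    by have : (inl @^-1` t) p by []; rewrite P0.
  exists y; first exact: hy.
  exists e; last exact: mulg1.
  exact: (sub1 (upN_sub _ (Kup p tp))).
have [q hq] : exists q, forall p, t (inl p) -> p.2 (lc q N) by apply: Pq; apply/set0P/eqP.
have [Q0|Qn] := pselect (inr @^-1` t = set0).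
  exists q => _ [w tw <-]; case: w tw => p tp; last first.
    by have : (inr @^-1` t) p by []; rewrite Q0.
  by exists (lc q N); [exact: hq|exact: (coset_self sN)].
have [y hy] : exists y, forall p, t (inr p) -> p.2 y by apply: Qy; apply/set0P/eqP.
set Ks := [set Kof p.1 | p in inr @^-1` t].
have : sm (\bigcap_(K in Ks) K) N = [set: G].
  apply: hSD.2.
  - exact: finite_image.
  - have [p tp] : (inr @^-1` t) !=set0 by apply/set0P/eqP.
    by move=> /seteqP [/(_ (Kof p.1)) h _]; apply: h; exists p.
  - by move=> _ [p tp <-]; exact: Kup.
move=> hs; have : [set: G] (y^-1 * q) by [].
rewrite -hs => -[k kK [n Nn kn]].
have yk : y * k = q * n^-1 by rewrite -(mulgK k n) kn gmulA mulKVg.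
exists (y * k) => _ [w tw <-]; case: w tw => p tp.
  exists (lc q N); first exact: hq.
  by rewrite yk; exists (n^-1) => //; exact: (subV sN).
exists y; first exact: hy.
by exists k => //; apply: kK; exists p.
Qed.
End Main.

Theorem theorem3p19 (R : realType) (G : group) (N : set G) (Hf : set (set G)) :
  is_normal N ->
  (forall H, Hf H -> is_subgroup H /\ H <> [set: G]) ->
  strongly_divided N Hf ->
  homotopy_equivalent R (realization R (CC Hf))
    (realization R (sjoin (CC_quot N Hf) (CC_sub N Hf))).
Proof.
move=> hN hH hSD.
apply: (@iso_heq R _ _ _ _ (@phiV G N Hf) (@psiV G N Hf)).
- by move=> s; apply: hV.
- by move=> t; apply: hW.
- by move=> v; apply: kV.
- by move=> w; apply: kW.
Qed.
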